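(* Let $w_1,w_2,\ldots$ be i.i.d. random variables from a distribution $\mathbb{P}_w\in\mathcal{D}_1\cup\mathcal{D}_2$. Then $\lim_{n\to\infty}\mathbb{P}\bigl(\sum_{i=1}^n w_i^2\ge\frac{1}{2}n\bigr)=1$.
   Context: For $s>0$, $\mathcal{D}_s$ is the class of distributions of $\xi$ with $\mathbb{E}[\xi]=0$ and $1\le\mathbb{E}[|\xi|^s]\le2$. *)

(* Defs.v *)
From HB Require Import structures.
From mathcomp Require Import all_boot all_order all_algebra.
From mathcomp Require Import all_classical all_reals all_analysis.
Set Implicit Arguments. Unset Strict Implicit. Unset Printing Implicit Defensive.
Import Order.TTheory GRing.Theory Num.Theory.
Local Open Scope classical_set_scope.
Local Open Scope ring_scope.

Definition mutually_independent d (T : measurableType d) (R : realType)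
    (P : probability T R) (w : nat -> {RV P >-> R}) : Prop :=
  forall (s : seq nat) (B : nat -> set R),
    uniq s -> (forall i, measurable (B i)) ->
    P (\bigcap_(i in [set` s]) (w i @^-1` B i)) =
    (\prod_(i <- s) P (w i @^-1` B i))%E.

Definition identically_distributed d (T : measurableType d) (R : realType)
    (P : probability T R) (w : nat -> {RV P >-> R}) : Prop :=
  forall i (B : set R), measurable B -> P (w i @^-1` B) = P (w 0 @^-1` B).

Definition in_D d (T : measurableType d) (R : realType)
    (P : probability T R) (s : R) (X : {RV P >-> R}) : Prop :=
  P.-integrable setT (EFin \o X) /\ ('E_P[X] = 0)%E /\
  (1%E <= \int[P]_x ((`|X x| `^ s)%:E) <= 2%E)%E.

(* Main.v *)
Require Import Defs.
From HB Require Import structures.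
From mathcomp Require Import all_boot all_order all_algebra.
From mathcomp Require Import all_classical all_reals all_analysis.
From mathcomp Require Import measurable_realfun.
From mathcomp.algebra_tactics Require Import ring lra.
Import Order.TTheory GRing.Theory Num.Theory.
Local Open Scope classical_set_scope.
Import numFieldNormedType.Exports.
Local Open Scope ring_scope.
Section RealAux.
Context (R : realType).

Lemma layer_le (h y : R) (K : nat) : 0 < h -> 0 <= y ->
  h * \sum_(j < K) ((((j.+1)%:R * h <= y)%R : bool)%:R : R) <= y.
Proof.
move=> h0 y0; elim: K => [|K IH]; first by rewrite big_ord0 mulr0.
rewrite big_ord_recr /=.
case: (leP ((K.+1)%:R * h) y) => hK.
- have S1 : \sum_(j < K) ((((j.+1)%:R * h <= y)%R : bool)%:R : R) <= K%:R.
    have -> : (K%:R : R) = \sum_(j < K) (1 : R) by rewrite sumr_const card_ord.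
    by apply: ler_sum => j _; rewrite lern1 leq_b1.
  apply: le_trans hK.
  rewrite -natr1 mulrDl mul1r mulrDr mulr1 lerD2r mulrC.
  by rewrite ler_wpM2r // ltW.
- by rewrite addr0.
Qed.

Lemma layer_all (h y : R) (K : nat) : 0 < h -> K%:R * h <= y ->
  \sum_(j < K) ((((j.+1)%:R * h <= y)%R : bool)%:R : R) = K%:R.
Proof.
move=> h0 hK; rewrite (eq_bigr (fun=> 1)) ?sumr_const ?card_ord // => j _.
rewrite (_ : (_ <= _) = true) //; apply: le_trans hK.
by apply: ler_wpM2r; [exact: ltW | rewrite ler_nat].
Qed.

Lemma layer_ge (h y : R) (K : nat) : 0 < h ->
  Num.min y (K%:R * h) <= h * \sum_(j < K) ((((j.+1)%:R * h <= y)%R : bool)%:R : R) + h.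
Proof.
move=> h0; case: (leP (K%:R * h) y) => hK.
  rewrite (layer_all _ _ _ h0 hK).
  by rewrite mulrC lerDl ltW.
elim: K hK => [|K IH] hK.
  rewrite big_ord0 mulr0 add0r; apply: ltW; apply: (lt_trans hK).
  by rewrite mul0r.
rewrite big_ord_recr /=.
have -> : ((K.+1)%:R * h <= y) = false by rewrite leNgt hK.
rewrite addr0.
case: (ltP y (K%:R * h)) => hK'; first exact: IH.
rewrite (layer_all _ _ _ h0 hK'); rewrite -natr1 in hK.
apply: ltW; apply: (lt_le_trans hK); rewrite mulrDl mul1r mulrC.
by rewrite lexx.
Qed.

End RealAux.
Section Cheb.
Context d (T : measurableType d) (R : realType) (P : probability T R).

Lemma int_sq_bound (g : nat -> T -> R) (H mu : R) (n : nat) :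
  (forall i, measurable_fun setT (g i)) ->
  (forall i x, 0 <= g i x <= H) ->
  (forall i k, i != k -> (\int[P]_x (g i x * g k x)%:E <= (mu ^+ 2)%:E)%E) ->
  (\int[P]_x ((\sum_(i < n) g i x) ^+ 2)%:E <=
     (n%:R ^+ 2 * mu ^+ 2 + n%:R * H ^+ 2)%:E)%E.
Proof.
move=> mg gH Egg.
have mgg i k : measurable_fun setT (fun x => g i x * g k x).
  exact: measurable_funM.
under eq_integral => x _.
  rewrite expr2 mulr_suml.
  under eq_bigr => i _ do rewrite mulr_sumr.
  rewrite -sumEFin.
  under eq_bigr => i _ do rewrite -sumEFin.
  over.
rewrite /= ge0_integral_sum //; last 2 first.
- move=> i; apply: emeasurable_sum => k.
  exact/measurable_EFinP.
- move=> i x _; rewrite sumEFin lee_fin; apply: sumr_ge0 => k _.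
  by apply: mulr_ge0; [case/andP: (gH i x)|case/andP: (gH k x)].
have inner (i : 'I_n) : (\int[P]_x (\sum_(k < n) (g i x * g k x)%:E) <=
     (n%:R * mu ^+ 2 + H ^+ 2)%:E)%E.
  rewrite ge0_integral_sum //; last 2 first.
  - by move=> k; exact/measurable_EFinP.
  - move=> k x _; rewrite lee_fin.
    by apply: mulr_ge0; [case/andP: (gH i x)|case/andP: (gH k x)].
  apply: (@le_trans _ _ (\sum_(k < n) ((mu ^+ 2) + (i == k)%:R * H ^+ 2)%:E)%E).
    apply: lee_sum => k _.
    have [<-|ik] := eqVneq i k.
      rewrite mul1r.
      apply: (@le_trans _ _ (\int[P]_x (cst (H ^+ 2)%:E x))%E).
        apply: ge0_le_integral => //.
        + by move=> x _; rewrite lee_fin; apply: mulr_ge0; case/andP: (gH i x).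
        + by apply/measurable_EFinP; exact: mgg.
        + move=> x _; rewrite lee_fin /= expr2.
          by case/andP: (gH i x) => g0 g1; apply: ler_pM.
      rewrite integral_cst //= probability_setT mule1 lee_fin lerDr.
      exact: sqr_ge0.
    rewrite mul0r addr0; apply: Egg.
    by rewrite (inj_eq val_inj).
  rewrite sumEFin lee_fin big_split /= sumr_const card_ord -mulr_suml.
  rewrite (bigD1 i) //= eqxx big1 ?addr0 ?mul1r; last first.
    by move=> k /negbTE; rewrite eq_sym => ->.
  by rewrite mulr_natl.
apply: (@le_trans _ _ (\sum_(i < n) (n%:R * mu ^+ 2 + H ^+ 2)%:E)%E).
  by apply: lee_sum => i _; apply: inner.
rewrite sumEFin lee_fin sumr_const card_ord.
by rewrite -mulr_natl le_eqVlt; apply/orP; left; apply/eqP; ring.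
Qed.

End Cheb.
Section Cheb2.
Context d (T : measurableType d) (R : realType) (P : probability T R).

Lemma ereal_aux (I J : \bar R) (a b u : R) : (0 <= I)%E ->
  (I + a%:E = J + b%:E)%E -> (J <= u%:E)%E -> (I <= (u + b - a)%:E)%E.
Proof.
case: I => [r||] //; case: J => [s||] //= _.
- move=> /eqP; rewrite eqe => /eqP e; rewrite !lee_fin => h; lra.
Qed.

Lemma cheb_bound (g : nat -> T -> R) (H mu : R) (n : nat) :
  (forall i, measurable_fun setT (g i)) ->
  (forall i x, 0 <= g i x <= H) ->
  (forall i, (\int[P]_x (g i x)%:E = mu%:E)%E) ->
  (forall i k, i != k -> (\int[P]_x (g i x * g k x)%:E <= (mu ^+ 2)%:E)%E) ->
  1/2 < mu -> (0 < n)%N ->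
  n%:R * (mu - 1/2) ^+ 2 * fine (P [set x | \sum_(i < n) g i x < n%:R / 2]) <= H ^+ 2.
Proof.
move=> mg gH Eg Egg mu12 n0.
have IS2 := @int_sq_bound d T R P g H mu n mg gH Egg.
set S := fun x => \sum_(i < n) g i x.
set c := n%:R * mu.
have mS : measurable_fun setT S by apply: measurable_sum.
have S0 x : 0 <= S x by apply: sumr_ge0 => i _; case/andP: (gH i x).
have c0 : 0 <= c by rewrite /c mulr_ge0 // (le_trans _ (ltW mu12)).
have IS : (\int[P]_x (S x)%:E = c%:E)%E.
  under eq_integral do rewrite /S -sumEFin.
  rewrite ge0_integral_sum //; last 2 first.
  - by move=> i; apply/measurable_EFinP.
  - by move=> i x _; rewrite lee_fin; case/andP: (gH i x).
  under eq_bigr do rewrite Eg.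
  by rewrite sumEFin sumr_const card_ord /c mulr_natl.
have mSc : measurable_fun setT (fun x => (S x - c) ^+ 2).
  by apply: measurable_funX; apply: measurable_funB => //; exact: measurable_cst.
have key : (\int[P]_x ((S x - c) ^+ 2)%:E + (2 * c * c)%:E =
            \int[P]_x (S x ^+ 2)%:E + (c ^+ 2)%:E)%E.
  have e1 : (\int[P]_x (((S x - c) ^+ 2)%:E + (2 * c)%:E * (S x)%:E) =
             \int[P]_x ((S x - c) ^+ 2)%:E + (2 * c * c)%:E)%E.
    rewrite ge0_integralD //.
    - rewrite ge0_integralZl_EFin //.
      + by rewrite IS -EFinM mulrA.
      + by move=> x _; rewrite lee_fin.
      + by apply/measurable_EFinP.
      + by rewrite mulr_ge0.
    - by move=> x _; rewrite lee_fin sqr_ge0.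
    - by apply/measurable_EFinP.
    - by move=> x _; rewrite -EFinM lee_fin; apply: mulr_ge0 => //; apply: mulr_ge0.
    - by apply: measurable_funeM; apply/measurable_EFinP.
  rewrite -e1.
  transitivity (\int[P]_x ((S x ^+ 2)%:E + cst (c ^+ 2)%:E x))%E.
    apply: eq_integral => x _; rewrite -EFinM -EFinD /=; congr EFin; ring.
  rewrite ge0_integralD //.
  - by rewrite integral_cst //= probability_setT mule1.
  - by move=> x _; rewrite lee_fin sqr_ge0.
  - by apply/measurable_EFinP; apply: measurable_funX.
  - by move=> x _; rewrite lee_fin sqr_ge0.
have IC : (\int[P]_x ((S x - c) ^+ 2)%:E <= (n%:R * H ^+ 2)%:E)%E.
  have I0 : (0 <= \int[P]_x ((S x - c) ^+ 2)%:E)%E.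
    by apply: integral_ge0 => x _; rewrite lee_fin sqr_ge0.
  have := ereal_aux _ _ _ _ _ I0 key IS2.
  have -> : n%:R ^+ 2 * mu ^+ 2 + n%:R * H ^+ 2 + c ^+ 2 - 2 * c * c = n%:R * H ^+ 2.
    by rewrite /c; ring.
  by [].
set E := [set x | S x < n%:R / 2].
have mE : measurable E.
  have -> : E = S @^-1` `]-oo, n%:R / 2[.
    by apply/seteqP; split => x /=; rewrite in_itv /=.
  by rewrite -[X in measurable X]setTI; apply: mS => //; exact: measurable_itv.
set D := (n%:R * (mu - 1/2)) ^+ 2.
have D0 : 0 <= D := sqr_ge0 _.
have M1 : (D%:E * P E <= \int[P]_x ((S x - c) ^+ 2)%:E)%E.
  rewrite -(setIT E) -integral_indic // -ge0_integralZl_EFin //; last first.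
    by apply/measurable_EFinP; exact: measurable_indic.
  apply: ge0_le_integral => //.
  - by move=> x _; rewrite -EFinM lee_fin; apply: mulr_ge0 => //; rewrite indicE ler0n.
  - by apply: measurable_funeM; apply/measurable_EFinP; exact: measurable_indic.
  - by apply/measurable_EFinP.
  - move=> x _; rewrite -EFinM lee_fin indicE.
    case: (boolP (x \in E)) => xE; last by rewrite mulr0 sqr_ge0.
    rewrite mulr1.
    move: xE; rewrite in_setE /= => xE.
    have a0 : 0 <= n%:R * (mu - 1/2) by rewrite mulr_ge0 // subr_ge0 ltW.
    have h1 : n%:R * (mu - 1/2) <= c - S x.
      move: xE; rewrite /E /c /S /= => xE; lra.
    rewrite /D; nra.
have M2 := le_trans M1 IC.
move: M2; rewrite -(fineK (fin_num_measure P E mE)) -EFinM lee_fin => M2.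
rewrite -(ler_pM2l (_ : 0 < n%:R)); last by rewrite ltr0n.
apply: le_trans M2; rewrite /D le_eqVlt; apply/orP; left; apply/eqP; ring.
Qed.

End Cheb2.
Section ExM.
Context d (T : measurableType d) (R : realType) (P : probability T R).

Lemma sq_int_ge1 (X : {RV P >-> R}) : in_D 1 X \/ in_D 2 X ->
  (1 <= \int[P]_x (X x ^+ 2)%:E)%E.
Proof.
have mX : measurable_fun setT X by exact: measurable_funPT.
case => -[_ [_ /andP[h _]]].
- have h2 : (2%:E <= \int[P]_x (2 * `|X x|)%:E)%E.
    under eq_integral do rewrite EFinM.
    rewrite ge0_integralZl_EFin //; last first.
      by apply/measurable_EFinP; exact: measurableT_comp.
    have -> : (\int[P]_x (`|X x|)%:E = \int[P]_x ((`|X x| `^ 1)%:E))%E.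
      by apply: eq_integral => x _; rewrite powRr1.
    by rewrite -[X in (X <= _)%E]mule1 lee_pmul2l.
  have h3 : (\int[P]_x (2 * `|X x|)%:E <= \int[P]_x (X x ^+ 2)%:E + 1)%E.
    have -> : (1 = \int[P]_x (cst 1%E x))%E.
      by rewrite integral_cst //= probability_setT mule1.
    rewrite -ge0_integralD //.
    apply: ge0_le_integral => //.
    + by apply/measurable_EFinP; apply: measurable_funM => //; exact: measurableT_comp.
    + apply: emeasurable_funD => //.
      by apply/measurable_EFinP; exact: measurable_funX.
    + move=> x _; rewrite /= -EFinD lee_fin.
      rewrite -(real_normK (num_real (X x))).
      have := sqr_ge0 (`|X x| - 1); nra.
    + by move=> x _; rewrite lee_fin sqr_ge0.
    + by apply/measurable_EFinP; exact: measurable_funX.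
  have aux (J : \bar R) : (2%:E <= J + 1)%E -> (1 <= J)%E.
    case: J => [r||] //= hJ; last by rewrite leey.
    have h' : (2%:E <= (r + 1)%:E)%E := hJ.
    rewrite lee_fin in h'; rewrite lee_fin; lra.
  exact: aux (le_trans h2 h3).
- apply: (le_trans h); rewrite le_eqVlt; apply/orP; left; apply/eqP.
  apply: eq_integral => x _; congr EFin.
  by rewrite powR_mulrn // real_normK // num_real.
Qed.

Lemma exM (X : {RV P >-> R}) : in_D 1 X \/ in_D 2 X ->
  exists M : nat, ((3/4)%:E <= \int[P]_x (Num.min (X x ^+ 2) M%:R)%:E)%E.
Proof.
move=> hD; have I1 := sq_int_ge1 _ hD.
have mX : measurable_fun setT X by exact: measurable_funPT.
pose g' (n : nat) x := (Num.min (X x ^+ 2) n%:R)%:E.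
have mg' n : measurable_fun setT (g' n).
  apply/measurable_EFinP; apply: measurable_minr; last exact: measurable_cst.
  exact: measurable_funX.
have g'0 n x : setT x -> (0 <= g' n x)%E.
  by move=> _; rewrite lee_fin le_min sqr_ge0 ler0n.
have nd n1 n2 : (n1 <= n2)%N -> forall x, (g' n1 x <= g' n2 x)%E.
  by move=> n12 x; rewrite lee_fin le_min2 // ler_nat.
have lim x : limn (g'^~ x) = (X x ^+ 2)%:E.
  apply/cvg_lim => //; apply: cvg_near_cst.
  exists (Num.Def.trunc (X x ^+ 2)).+1 => // n /= hn.
  rewrite /g' min_l //; apply: ltW; apply: (lt_le_trans (truncnS_gt _)).
  by rewrite ler_nat.
have MC := @monotone_convergence d T R P setT measurableT g' mg' g'0 (fun x _ m n mn => nd m n mn x).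
have ndI : {homo (fun n => (\int[P]_x g' n x)%E) : n m / (n <= m)%N >-> (n <= m)%E}.
  move=> m n mn; apply: ge0_le_integral => //; first exact: g'0.
  by move=> x _; exact: nd mn x.
have cI := ereal_nondecreasing_is_cvgn ndI.
have : ((3/4)%:E < limn (fun n => (\int[P]_x g' n x)%E))%E.
  rewrite -MC; under eq_integral do rewrite lim.
  by apply: lt_le_trans I1; rewrite lte_fin; lra.
move=> /(lte_lim ndI cI) [N _ HN].
by exists N; apply: (HN N) => /=.
Qed.

End ExM.
Section Main.
Context d (T : measurableType d) (R : realType) (P : probability T R).

Lemma sqset_meas (c : R) : measurable [set y : R | c <= y ^+ 2].
Proof.
have mf : measurable_fun setT (fun y : R => y ^+ 2).
  by apply: measurable_funX; exact: measurable_id.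
have -> : [set y : R | c <= y ^+ 2] = setT `&` (fun y => y ^+ 2) @^-1` `[c, +oo[.
  apply/seteqP; split => y /=.
  - by move=> cy; split => //; rewrite in_itv /= andbT.
  - by move=> [_]; rewrite in_itv /= andbT.
exact: mf measurableT _ (measurable_itv _).
Qed.

Lemma intind (c : R) (B : set T) : 0 <= c -> measurable B ->
  (\int[P]_x (c * \1_B x)%:E = (c * fine (P B))%:E)%E.
Proof.
move=> c0 mB.
under eq_integral do rewrite EFinM.
rewrite ge0_integralZl_EFin //; last first.
  by apply/measurable_EFinP; exact: measurable_indic.
rewrite integral_indic // setIT EFinM fineK //.
exact: fin_num_measure.
Qed.

Lemma prod_sums (K : nat) (h : R) (a b : 'I_K -> R) :
  (h * \sum_(j < K) a j) * (h * \sum_(l < K) b l) =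
  \sum_(p : 'I_K * 'I_K) h * h * (a p.1 * b p.2).
Proof.
rewrite mulrACA -mulr_sumr; congr (_ * _).
rewrite -(pair_bigA _ (fun j l => a j * b l)) /= mulr_suml; apply: eq_bigr => j _.
by rewrite mulr_sumr.
Qed.

Lemma meas_lt (f : T -> R) (c : R) : measurable_fun setT f ->
  measurable [set x | f x < c].
Proof.
move=> mf.
have -> : [set x | f x < c] = setT `&` f @^-1` `]-oo, c[.
  apply/seteqP; split => x /=.
  - by move=> h; split => //; rewrite in_itv.
  - by case=> _; rewrite in_itv.
exact: mf measurableT _ (measurable_itv _).
Qed.

Lemma meas_ge (f : T -> R) (c : R) : measurable_fun setT f ->
  measurable [set x | c <= f x].
Proof.
move=> mf.
have -> : [set x | c <= f x] = setT `&` f @^-1` `[c, +oo[.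
  apply/seteqP; split => x /=.
  - by move=> h; split => //; rewrite in_itv /= andbT.
  - by case=> _; rewrite in_itv /= andbT.
exact: mf measurableT _ (measurable_itv _).
Qed.

End Main.
Theorem lemmaA9 (d : measure_display) (T : measurableType d) (R : realType)
    (P : probability T R) (w : nat -> {RV P >-> R}) :
  mutually_independent w -> identically_distributed w ->
  (in_D 1 (w 0) \/ in_D 2 (w 0)) ->
  (fun n : nat => fine (P [set x | n%:R / 2 <= \sum_(i < n) (w i x) ^+ 2]))
    @ \oo --> (1 : R).
Proof.
move=> Hind Hid HD.
have [M HM] := @exM _ _ _ _ _ HD.
pose h : R := 1 / 8.
pose K := (8 * M)%N.
have h0 : 0 < h by rewrite /h; lra.
have Kh : K%:R * h = M%:R by rewrite /K natrM /h; lra.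
have mw i : measurable_fun setT (w i) by exact: measurable_funPT.
pose B (j : nat) := [set y : R | (j.+1)%:R * h <= y ^+ 2].
pose A i j := w i @^-1` B j.
have mA i j : measurable (A i j).
  rewrite -[A i j]setTI; apply: (mw i) => //; exact: sqset_meas.
have PA i j : P (A i j) = P (A 0%N j) by apply: Hid; exact: sqset_meas.
have PAI i k j l : i != k -> P (A i j `&` A k l) = (P (A i j) * P (A k l))%E.
  move=> ik.
  have := Hind [:: i; k] (fun m => if m == i then B j else B l).
  have uik : uniq [:: i; k] by rewrite /= inE andbT.
  have mB : forall m, measurable (if m == i then B j else B l).
    by move=> m; case: ifP => _; exact: sqset_meas.
  move=> /(_ uik mB).
  have ki : k != i by rewrite eq_sym.
  rewrite big_cons big_cons big_nil mule1 => e.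
  have e2 : (if i == i then B j else B l) = B j by rewrite eqxx.
  have e3 : (if k == i then B j else B l) = B l by rewrite (negbTE ki).
  rewrite e2 e3 in e; rewrite -e.
  congr (P _); apply/seteqP; split => x /=.
  - move=> [h1 h2] m /=; rewrite !inE => /orP[/eqP ->|/eqP ->].
      by rewrite eqxx.
    by rewrite (negbTE ki).
  - move=> H; split.
    + have hi : [set` [:: i; k]] i by rewrite /= inE eqxx.
      by have := H i hi; rewrite /= eqxx.
    + have hk : [set` [:: i; k]] k by rewrite /= !inE eqxx orbT.
      by have := H k hk; rewrite /= (negbTE ki).
pose g i x := h * \sum_(j < K) \1_(A i j) x.
have gE i x : g i x = h * \sum_(j < K) ((((j.+1)%:R * h <= w i x ^+ 2)%R : bool)%:R : R).
  rewrite /g; congr (_ * _); apply: eq_bigr => j _; rewrite indicE.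
  have -> : (x \in A i j) = ((j.+1)%:R * h <= w i x ^+ 2)%R.
    by apply/idP/idP; rewrite in_setE => H; exact: H.
  by [].
pose mu := h * \sum_(j < K) fine (P (A 0%N j)).
have mg i : measurable_fun setT (g i).
  apply: measurable_funM; first exact: measurable_cst.
  by apply: measurable_sum => j; exact: measurable_indic.
have gH i x : 0 <= g i x <= h * K%:R.
  rewrite gE; apply/andP; split.
    by apply: mulr_ge0; [exact: ltW | apply: sumr_ge0 => j _; rewrite ler0n].
  apply: ler_wpM2l; first exact: ltW.
  have -> : (K%:R : R) = \sum_(j < K) (1 : R) by rewrite sumr_const card_ord.
  by apply: ler_sum => j _; rewrite lern1 leq_b1.
have Eg i : (\int[P]_x (g i x)%:E = mu%:E)%E.
  under eq_integral do rewrite /g mulr_sumr -sumEFin.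
  rewrite ge0_integral_sum //; last 2 first.
  - by move=> j; apply/measurable_EFinP; apply: measurable_funM;
      [exact: measurable_cst | exact: measurable_indic].
  - move=> j x _; rewrite lee_fin; apply: mulr_ge0; first exact: ltW.
    by rewrite indicE.
  under eq_bigr do rewrite intind ?ltW // PA.
  by rewrite sumEFin /mu mulr_sumr.
have Egg i k : i != k -> (\int[P]_x (g i x * g k x)%:E <= (mu ^+ 2)%:E)%E.
  move=> ik; rewrite le_eqVlt; apply/orP; left; apply/eqP.
  under eq_integral do rewrite /g prod_sums -sumEFin.
  rewrite ge0_integral_sum //; last 2 first.
  - by move=> p; apply/measurable_EFinP; apply: measurable_funM;
      [exact: measurable_cst | apply: measurable_funM; exact: measurable_indic].
  - move=> p x _; rewrite lee_fin; apply: mulr_ge0; first by apply: mulr_ge0; exact: ltW.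
    by apply: mulr_ge0; rewrite indicE.
  have indI (U V : set T) x : \1_U x * \1_V x = \1_(U `&` V) x :> R.
    by rewrite indicI.
  under eq_bigr => p _.
    rewrite (eq_integral (fun x => (h * h * \1_(A i p.1 `&` A k p.2) x)%:E)); last first.
      by move=> x _; rewrite indI.
    rewrite intind; last 2 first.
      by rewrite mulr_ge0 // ltW.
      exact: measurableI.
    over.
  rewrite sumEFin expr2 /mu prod_sums; congr EFin; apply: eq_bigr => p _.
  rewrite PAI // PA (PA k) fineM //; exact: fin_num_measure.
have mu12 : 1/2 < mu.
  have le1 : (\int[P]_x (Num.min (w 0%N x ^+ 2) M%:R)%:E <=
              \int[P]_x ((g 0%N x)%:E + cst h%:E x))%E.
    apply: ge0_le_integral => //.
    - by move=> x _; rewrite lee_fin le_min sqr_ge0 ler0n.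
    - apply/measurable_EFinP; apply: measurable_minr; last exact: measurable_cst.
      exact: measurable_funX.
    - apply: emeasurable_funD => //; exact/measurable_EFinP.
    - move=> x _; rewrite /= -EFinD lee_fin gE -Kh.
      exact: layer_ge.
  rewrite ge0_integralD // in le1; last 3 first.
  - by move=> x _; rewrite lee_fin; case/andP: (gH 0%N x).
  - exact/measurable_EFinP.
  - by move=> x _; rewrite /= lee_fin ltW.
  rewrite Eg integral_cst //= probability_setT mule1 -EFinD in le1.
  have := le_trans HM le1; rewrite lee_fin /h; lra.
have gle i x : g i x <= w i x ^+ 2.
  by rewrite gE; apply: layer_le => //; exact: sqr_ge0.
pose C := (h * K%:R) ^+ 2 / (mu - 1/2) ^+ 2.
have C0 : 0 <= C by rewrite /C divr_ge0 // sqr_ge0.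
have mG n : measurable [set x | n%:R / 2 <= \sum_(i < n) w i x ^+ 2].
  apply: meas_ge; apply: measurable_sum => i; apply: measurable_funX; exact: mw.
have upper n : fine (P [set x | n%:R / 2 <= \sum_(i < n) w i x ^+ 2]) <= 1.
  rewrite -lee_fin fineK ?fin_num_measure //; exact: probability_le1.
have bound n : (0 < n)%N ->
    1 - C / n%:R <= fine (P [set x | n%:R / 2 <= \sum_(i < n) w i x ^+ 2]).
  move=> n0.
  have cb := @cheb_bound d T R P g (h * K%:R) mu n mg gH Eg Egg mu12 n0.
  set E := [set x | \sum_(i < n) g i x < n%:R / 2] in cb.
  have mE : measurable E by apply: meas_lt; apply: measurable_sum => i; exact: mg.
  set G := [set x | n%:R / 2 <= \sum_(i < n) w i x ^+ 2].
  have sub : ~` E `<=` G.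
    move=> x /= hx.
    have hx' : n%:R / 2 <= \sum_(i < n) g i x by rewrite leNgt; apply/negP.
    apply: (le_trans hx'); apply: ler_sum => i _; exact: gle.
  have PG : (P (~` E) <= P G)%E.
    by apply: le_measure => //; rewrite inE; [exact: measurableC | exact: mG].
  rewrite probability_setC // -(fineK (fin_num_measure P E mE)) -EFinB in PG.
  rewrite -(fineK (fin_num_measure P G (mG n))) lee_fin in PG.
  have q_le : fine (P E) <= C / n%:R.
    have a0 : 0 < (mu - 1/2) ^+ 2 by rewrite exprn_gt0 // subr_gt0.
    have n0' : 0 < n%:R :> R by rewrite ltr0n.
    rewrite /C ler_pdivlMr // ler_pdivlMr //.
    apply: le_trans cb; rewrite le_eqVlt; apply/orP; left; apply/eqP; ring.
  lra.
rewrite -cvg_shiftS.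
apply: (@squeeze_cvgr _ _ _ _ (fun n => 1 - C * harmonic n) (fun=> 1)).
- apply: nearW => n /=; apply/andP; split; last exact: upper.
  exact: (bound n.+1).
- rewrite -[X in _ --> X]subr0 -[X in _ - X](mulr0 C).
  apply: cvgB; first exact: cvg_cst.
  apply: cvgMl_tmp; exact: cvg_harmonic.
- exact: cvg_cst.
Qed.
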